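(* Consider the remote-attestation Stackelberg game described in the context with a single device $\delta$ (so $\mathcal{D}=\{\delta\}$ and the only class is $\mathcal{E}=\{\delta\}$) and a single attestation method $m$. Let $$\tau_\delta=\frac{1}{\mu^m}\cdot\frac{C_A^{\mathcal{E}}+C_A^\delta-G_A^\delta}{L_A^\delta-G_A^\delta}.$$ Then the defender's optimal attestation strategy ${p^*}_\delta^m$ is $${p^*}_\delta^m=\begin{cases}0&\text{if } C_D^m\ge (G_D^\delta-L_D^\delta)\cdot\mu^m \text{ and } \tau_\delta\ge \frac{L_D^\delta}{-C_D^m},\\ \tau_\delta&\text{otherwise.}\end{cases}$$
   Context: Remote-attestation game: there is a finite set $\mathcal{D}$ of devices partitioned into pairwise disjoint device classes, and a finite set $\mathcal{M}$ of attestation methods. Constants: for each method $m$, a detection probability $\mu^m$ and a defender cost $C_D^m$ of running $m$ on a device; for each device $\delta$, an attacker cost $C_A^\delta$ of attacking it; for each class $\mathcal{E}$, an attacker exploit-development cost $C_A^{\mathcal{E}}$; for each device $\delta$, defender gain $G_D^\delta$ and loss $L_D^\delta$, attacker gain $G_A^\delta$ and loss $L_A^\delta$ (losses are negative values), with $G_D^\delta=-L_A^\delta$ and $L_D^\delta=-G_A^\delta$. The defender (leader) chooses $\vec p=\langle p_\delta^m\rangle\in[0,1]^{|\mathcal{D}\times\mathcal{M}|}$ ($p_\delta^m$ = probability of running $m$ on $\delta$); the attacker (follower) chooses $\vec a\in\{0,1\}^{|\mathcal{D}|}$. $P_\delta(\vec p)=1-\prod_{m}(1-\mu^m p_\delta^m)$;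 $C_D^T(\vec p)=\sum_\delta\sum_m C_D^m p_\delta^m$; $U_D(\vec p,\vec a)=\sum_\delta[G_D^\delta P_\delta(\vec p)+L_D^\delta(1-P_\delta(\vec p))]a_\delta-C_D^T(\vec p)$; $C_A^T(\vec a)=\sum_{\mathcal{E}}\big(C_A^{\mathcal{E}}1_{\{\exists\delta\in\mathcal{E}:a_\delta=1\}}+\sum_{\delta\in\mathcal{E}}C_A^\delta a_\delta\big)$; $U_A(\vec p,\vec a)=\sum_\delta[L_A^\delta P_\delta(\vec p)+G_A^\delta(1-P_\delta(\vec p))]a_\delta-C_A^T(\vec a)$. Attacker best response: $\mathcal{F}_A(\vec p)=\operatorname{argmax}_{\vec a}U_A(\vec p,\vec a)$. The defender's optimal strategy is $\vec p^*=\operatorname{argmax}_{\vec p,\ \vec a\in\mathcal{F}_A(\vec p)}U_D(\vec p,\vec a)$ (i.e., ties in the attacker's best response are broken in favor of the defender). *)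

(* Defs.v *)
From mathcomp Require Import all_boot all_order all_algebra.
Set Implicit Arguments. Unset Strict Implicit. Unset Printing Implicit Defensive.
Import Order.TTheory GRing.Theory Num.Theory.
Local Open Scope ring_scope.

Section Game.
Variables (R : realFieldType) (D M K : finType).
(* cls d = the device class of d (classes are the fibres of cls, hence a partition) *)
Variable cls : D -> K.
Variables (mu CD : M -> R) (CAd : D -> R) (CAE : K -> R).
Variables (GD LD GA LA : D -> R).

Definition Pdet (p : D -> M -> R) (d : D) : R :=
  1 - \prod_(m : M) (1 - mu m * p d m).

Definition CDT (p : D -> M -> R) : R := \sum_(d : D) \sum_(m : M) CD m * p d m.

Definition UD (p : D -> M -> R) (a : D -> bool) : R :=
  \sum_(d : D) (GD d * Pdet p d + LD d * (1 - Pdet p d)) * (a d)%:R - CDT p.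

Definition CAT (a : D -> bool) : R :=
  \sum_(E : K) (CAE E * ([exists d, (cls d == E) && a d] : nat)%:R
                + \sum_(d | cls d == E) CAd d * (a d)%:R).

Definition UA (p : D -> M -> R) (a : D -> bool) : R :=
  \sum_(d : D) (LA d * Pdet p d + GA d * (1 - Pdet p d)) * (a d)%:R - CAT a.

Definition best_response (p : D -> M -> R) (a : D -> bool) : Prop :=
  forall a' : D -> bool, UA p a' <= UA p a.

Definition valid_strategy (p : D -> M -> R) : Prop :=
  forall d m, 0 <= p d m <= 1.

(* p is in argmax_{p', a' in F_A(p')} U_D(p', a') (ties broken for the defender) *)
Definition optimal_defender (p : D -> M -> R) : Prop :=
  valid_strategy p /\
  exists a, best_response p a /\
    forall p' a', valid_strategy p' -> best_response p' a' -> UD p' a' <= UD p a.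

End Game.

(* Main.v *)
Require Import Defs.
From mathcomp Require Import all_boot all_order all_algebra.
From mathcomp Require Import ring lra.
Import Order.TTheory GRing.Theory Num.Theory.
Local Open Scope ring_scope.

Theorem proposition1 (R : realFieldType) (D M K : finType) (cls : D -> K)
    (mu CD : M -> R) (CAd : D -> R) (CAE : K -> R) (GD LD GA LA : D -> R)
    (dl : D) (m : M)
    (hD : forall d : D, d = dl) (hM : forall m' : M, m' = m)
    (hK : forall E : K, E = cls dl)
    (hmu : 0 < mu m <= 1) (hCD : 0 < CD m)
    (hCAd : 0 <= CAd dl) (hCAE : 0 <= CAE (cls dl))
    (hLA : LA dl < 0) (hGA : 0 < GA dl)
    (hGD : GD dl = - LA dl) (hLD : LD dl = - GA dl)
    (htau : let tau := (mu m)^-1 * ((CAE (cls dl) + CAd dl - GA dl) / (LA dl - GA dl)) in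
            0 <= tau <= 1) :
  let tau := (mu m)^-1 * ((CAE (cls dl) + CAd dl - GA dl) / (LA dl - GA dl)) in
  let pstar : R :=
    if (CD m >= (GD dl - LD dl) * mu m) && (tau >= LD dl / (- CD m)) then 0 else tau in
  optimal_defender cls mu CD CAd CAE GD LD GA LA (fun _ _ => pstar).
Proof.
move=> tau pstar.
have sum1 : forall (T : finType) (t : T) (F : T -> R), (forall x, x = t) ->
   \sum_(x : T) F x = F t.
  move=> T t F h; rewrite (bigD1 t) //= big_pred0 ?addr0 // => x.
  by rewrite (h x) eqxx.
have prod1 : forall (T : finType) (t : T) (F : T -> R), (forall x, x = t) ->
   \prod_(x : T) F x = F t.
  move=> T t F h; rewrite (bigD1 t) //= big_pred0 ?mulr1 // => x.
  by rewrite (h x) eqxx.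
have HP : forall p, Pdet mu p dl = mu m * p dl m.
  by move=> p; rewrite /Pdet (prod1 _ m) // opprB addrC subrK.
have HCAT : forall a, CAT cls CAd CAE a = (CAE (cls dl) + CAd dl) * (a dl)%:R.
  move=> a; rewrite /CAT (sum1 _ (cls dl)) // big_mkcond /= (sum1 _ dl) //= eqxx.
  have -> : [exists d, (cls d == cls dl) && a d] = a dl.
    apply/existsP/idP => [[d /andP[_]]|ad]; first by rewrite (hD d).
    by exists dl; rewrite eqxx.
  by rewrite mulrDl.
have HUA : forall p a, UA cls mu CAd CAE GA LA p a =
   (GA dl - CAE (cls dl) - CAd dl + mu m * p dl m * (LA dl - GA dl)) * (a dl)%:R.
  move=> p a; rewrite /UA (sum1 _ dl) // HCAT HP -mulrBl; congr (_ * _); ring.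
have HUD : forall p a, UD mu CD GD LD p a =
   (LD dl + p dl m * (mu m * (GD dl - LD dl))) * (a dl)%:R - CD m * p dl m.
  move=> p a; rewrite /UD /CDT !(sum1 _ dl) // (sum1 _ m) // HP; congr (_ * _ - _); ring.
have hmu0 : mu m != 0 by case/andP: hmu => h _; rewrite gt_eqF.
have hLG : LA dl - GA dl != 0 by rewrite ltr0_neq0 //; lra.
have HA : forall x, GA dl - CAE (cls dl) - CAd dl + mu m * x * (LA dl - GA dl)
     = mu m * (LA dl - GA dl) * (x - tau).
  by move=> x; rewrite /tau; field; rewrite hmu0 hLG.
have /andP[tau0 tau1] : 0 <= tau <= 1 := htau.
clearbody tau; clear htau.
case/andP: hmu => mu0 mu1.
have mLG : mu m * (LA dl - GA dl) < 0 by nra.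
have BR1 : forall p a, best_response cls mu CAd CAE GA LA p a ->
    (a dl -> p dl m <= tau) /\ (~~ a dl -> tau <= p dl m).
  move=> p a hb; split => ha.
    have := hb (fun _ => false); rewrite !HUA ha HA /=; nra.
  have := hb (fun _ => true); rewrite !HUA (negbTE ha) HA /=; nra.
have BR2 : forall p (a : D -> bool), (a dl -> p dl m <= tau) -> (~~ a dl -> tau <= p dl m) ->
    best_response cls mu CAd CAE GA LA p a.
  move=> p a h1 h2 a'; rewrite !HUA !HA.
  case: (a dl) h1 h2 => /= h1 h2; case: (a' dl) => /=;
    first [have := h1 erefl; nra | have := h2 erefl; nra | nra].
have HLD : LD dl / - CD m * - CD m = LD dl.
  by field; rewrite ?oppr_eq0 gt_eqF.
rewrite /optimal_defender /valid_strategy /pstar.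
set r := LD dl / - CD m in HLD *.
clearbody r.
case: ifP => [/andP[c1 c2] | hc].
  split; first by move=> _ _; rewrite lexx ler01.
  exists (fun _ => true); split; first by apply: BR2.
  move=> p' a' hv hb; have [h1 h2] := BR1 _ _ hb; have /andP[v0 v1] := hv dl m.
  rewrite !HUD /=; case: (a' dl) h1 h2 => /= h1 h2.
    have := h1 erefl; nra.
  have := h2 erefl => hp.
  have : 0 <= CD m * (p' dl m - r) by apply: mulr_ge0; lra.
  rewrite mulr0 mulr1; nra.
split; first by move=> _ _; apply/andP.
set k := mu m * (GD dl - LD dl).
exists (fun _ => - CD m * tau <= (LD dl + tau * k) - CD m * tau); split.
  by apply: BR2 => _.
move=> p' a' hv hb; have [h1 h2] := BR1 _ _ hb; have /andP[v0 v1] := hv dl m.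
move/negbT: hc; rewrite negb_and -!ltNge => hc.
rewrite !HUD /=.
have hr : (GD dl - LD dl) * mu m = k by rewrite /k mulrC.
rewrite hr in hc; clearbody k.
have hCr : 0 <= CD m * (r - tau) \/ k - CD m > 0.
  by case/orP: hc => hc; [right; lra | left; apply: mulr_ge0; lra].
case: (lerP 0 (k - CD m)) => hKk.
  have e1 : forall x, 0 <= x -> 0 <= x * (k - CD m) by move=> x hx; apply: mulr_ge0.
  case: (lerP (- CD m * tau) (LD dl + tau * k - CD m * tau)) => /= hx; case: (a' dl) h1 h2 => /= h1 h2;
    rewrite ?mulr1 ?mulr0 ?add0r ?sub0r; first [have := h1 erefl | have := h2 erefl] => hp.
  - have := e1 (tau - p' dl m); nra.
  - have : 0 <= CD m * (p' dl m - tau) by apply: mulr_ge0; lra.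
    nra.
  - have := e1 (tau - p' dl m); nra.
  - have : 0 <= CD m * (p' dl m - tau) by apply: mulr_ge0; lra.
    nra.
have e1 : forall x, 0 <= x -> x * (k - CD m) <= 0 by move=> x hx; apply: mulr_ge0_le0 => //; lra.
case: hCr => hCr; last lra.
case: (lerP (- CD m * tau) (LD dl + tau * k - CD m * tau)) => /= hx; case: (a' dl) h1 h2 => /= h1 h2;
  rewrite ?mulr1 ?mulr0 ?add0r ?sub0r; first [have := h1 erefl | have := h2 erefl] => hp.
- have := e1 (p' dl m); nra.
- have : 0 <= CD m * (p' dl m - tau) by apply: mulr_ge0; lra.
  nra.
- have := e1 (p' dl m); nra.
- have : 0 <= CD m * (p' dl m - tau) by apply: mulr_ge0; lra.
  nra.
Qed.
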